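(* There exists an invertible matrix $N\in\mathbb C^{n\times n}$ such that $$B(x_1,x_2,x_3)=x_3\,N\,S(x_1,x_2,x_3).$$
   Context: Let $a,b,c\in\mathbb C[s,v]$ be homogeneous of the same degree $n\ge3$, $\gcd(a,b,c)=1$, with $\phi=(a:b:c)$ birational onto its image. Let $p,q$ be a $\mu$-basis: a homogeneous basis of degrees $\mu\le n-\mu$ of the free syzygy module of $(a,b,c)$. $B(x_1,x_2,x_3)=(B_{i,j})_{0\le i,j\le n-1}\in\mathbb C[x_1,x_2,x_3]^{n\times n}$ is the Bézout matrix of $a(s,1)x_3-c(s,1)x_1$ and $b(s,1)x_3-c(s,1)x_2$, defined by $\sum_{i,j}B_{i,j}s^it^j=\frac{1}{s-t}\big[(a(s,1)x_3-c(s,1)x_1)(b(t,1)x_3-c(t,1)x_2)-(a(t,1)x_3-c(t,1)x_1)(b(s,1)x_3-c(s,1)x_2)\big]$. $S(x_1,x_2,x_3)$ is the $n\times n$ Sylvester matrix with respect to $(s,v)$ of $\sum_ix_ip_i(s,v)$ and $\sum_ix_iq_i(s,v)$, whose rows are the coefficient vectors, in the monomial basis of $\mathbb C[s,v]_{n-1}$, of $v^{n-\mu-1-k}s^k\sum_ix_ip_i$ ($0\le k\le n-\mu-1$) and $v^{\mu-1-k}s^k\sum_ix_iq_i$ ($0\le k\le\mu-1$), the rows of $B$ being likewise indexed so that row $i$ is the coefficient vector of $\sum_jB_{i,j}(\cdot)$ in the same monomial basis. *)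

(* Defs.v *)
(* Bivariate polynomials C[s,v] are modelled as
   {poly {poly R}}: the outer variable is v, the inner (coefficient) one is s. *)
From HB Require Import structures.
From mathcomp Require Import all_boot all_order all_algebra.
Set Implicit Arguments. Unset Strict Implicit. Unset Printing Implicit Defensive.
Import GRing.Theory.
Local Open Scope ring_scope.

Definition coef2 (R : nzRingType) (P : {poly {poly R}}) (i j : nat) : R :=
  (P`_j)`_i.

Definition homog (R : nzRingType) (d : nat) (P : {poly {poly R}}) : Prop :=
  forall i j, coef2 P i j != 0 -> (i + j)%N = d.

Definition pdvd (R : comNzRingType) (h f : {poly {poly R}}) : Prop :=
  exists g, f = h * g.

Definition coprime3 (R : idomainType) (a b c : {poly {poly R}}) : Prop :=
  forall h, pdvd h a -> pdvd h b -> pdvd h c -> h \is a GRing.unit.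

Definition ev2 (R : comNzRingType) (P : {poly {poly R}}) (s0 v0 : R) : R :=
  (P.[v0%:P]).[s0].

(* phi = (a:b:c) : P^1 -> P^2 is birational onto its image, i.e. generically
   injective: outside a finite set of parameters (s:1), two parameters with
   the same image point (proportional coordinate vectors) coincide. *)
Definition birational_param (R : fieldType) (a b c : {poly {poly R}}) : Prop :=
  exists E : seq R, forall s1 s2 : R, s1 \notin E -> s2 \notin E ->
    let a1 := ev2 a s1 1 in let b1 := ev2 b s1 1 in let c1 := ev2 c s1 1 in
    let a2 := ev2 a s2 1 in let b2 := ev2 b s2 1 in let c2 := ev2 c s2 1 in
    a1 * b2 = a2 * b1 -> a1 * c2 = a2 * c1 -> b1 * c2 = b2 * c1 -> s1 = s2.

Definition abc (R : nzRingType) (a b c : {poly {poly R}}) : 'I_3 -> {poly {poly R}} :=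
  fun i => nth 0 [:: a; b; c] i.

Definition syz (R : comNzRingType) (f r : 'I_3 -> {poly {poly R}}) : Prop :=
  \sum_(i < 3) r i * f i = 0.

Definition mu_basis (R : comNzRingType) (n mu : nat)
    (f p q : 'I_3 -> {poly {poly R}}) : Prop :=
  [/\ (mu <= n - mu)%N,
      (forall i, homog mu (p i)) /\ (forall i, homog (n - mu) (q i)),
      syz f p /\ syz f q,
      (forall r, syz f r -> exists h1 h2, forall i, r i = h1 * p i + h2 * q i) &
      (forall h1 h2, (forall i, h1 * p i + h2 * q i = 0) -> h1 = 0 /\ h2 = 0)].

(* Bezoutian (F(s)G(t) - F(t)G(s)) / (s - t) in R[s][t] (t outer) *)
Definition bezout_poly (R : idomainType) (F G : {poly R}) : {poly {poly R}} :=
  (F%:P * map_poly polyC G - map_poly polyC F * G%:P) %/ (('X : {poly R})%:P - 'X).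

Definition bezout_mx (R : idomainType) (n : nat) (F G : {poly R}) : 'M[R]_n :=
  \matrix_(i < n, j < n) coef2 (bezout_poly F G) i j.

Definition lin (R : comNzRingType) (x : 'I_3 -> R) (P : 'I_3 -> {poly {poly R}}) :
  {poly {poly R}} := \sum_(i < 3) ((x i)%:P)%:P * P i.

(* Sylvester matrix: rows v^(n-mu-1-k) s^k (sum x_i p_i), k < n - mu, then
   v^(mu-1-k) s^k (sum x_i q_i), k < mu; column j is the coefficient of
   s^j v^(n-1-j). *)
Definition sylv (R : comNzRingType) (n mu : nat) (p q : 'I_3 -> {poly {poly R}})
    (x : 'I_3 -> R) : 'M[R]_n :=
  \matrix_(r < n, j < n)
    let P := if (r < n - mu)%N
             then 'X^(n - mu - 1 - r) * ('X^r)%:P * lin x p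
             else 'X^(mu - 1 - (r - (n - mu))) * ('X^(r - (n - mu)))%:P * lin x q in
    coef2 P j (n - 1 - j).

(* Main.v *)
Require Import Defs.
From HB Require Import structures.
From mathcomp Require Import all_boot all_order all_algebra.
From Stdlib Require Import Ring Lia.
Set Implicit Arguments. Unset Strict Implicit. Unset Printing Implicit Defensive.
Import GRing.Theory.
Local Open Scope ring_scope.


Definition rad (R : comNzRingType) (x y : R) : R := x + y.
Definition rmu (R : comNzRingType) (x y : R) : R := x * y.
Definition rop (R : comNzRingType) (x : R) : R := - x.
Definition rsu (R : comNzRingType) (x y : R) : R := @rad R x (@rop R y).
Definition r0 (R : comNzRingType) : R := 0.
Definition r1 (R : comNzRingType) : R := 1.
Lemma RT (R : comNzRingType) : @ring_theory (GRing.ComNzRing.sort R) (r0 R) (r1 R) (@rad R) (@rmu R) (@rsu R) (@rop R) eq.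
Proof. rewrite /rad /rmu /rop /rsu /r0 /r1; split.
- exact: add0r. - exact: addrC. - exact: addrA. - exact: mul1r. - exact: mulrC.
- exact: mulrA. - exact: mulrDl. - by []. - exact: subrr. Qed.
Lemma raddE (R : comNzRingType) (x y : R) : x + y = rad x y. Proof. by []. Qed.
Lemma rmulE (R : comNzRingType) (x y : R) : x * y = rmu x y. Proof. by []. Qed.
Lemma roppE (R : comNzRingType) (x : R) : - x = rop x. Proof. by []. Qed.
Lemma r0E (R : comNzRingType) : 0 = r0 R. Proof. by []. Qed.
Lemma r1E (R : comNzRingType) : 1 = r1 R. Proof. by []. Qed.
Ltac rring := rewrite ?raddE ?rmulE ?roppE ?r0E ?r1E; match goal with |- @eq _ ?l ?r => match l with | context [@rmu ?T _ _] => change (@eq (GRing.ComNzRing.sort T) l r) | context [@rad ?T _ _] => change (@eq (GRing.ComNzRing.sort T) l r) end end; ring.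

Ltac nlia := repeat match goal with
  | H : is_true (_ <= _)%N |- _ => move: H; move/leP; intro
  | H : is_true (_ < _)%N |- _ => move: H; move/ltP; intro
  | H : is_true (~~ (_ <= _)%N) |- _ => move: H; rewrite -ltnNge; intro
  | H : is_true (~~ (_ < _)%N) |- _ => move: H; rewrite -leqNgt; intro
  | H : is_true (_ == _)%N |- _ => move: H; move/eqP; intro
  end;
  try match goal with |- is_true (_ <= _)%N => apply/leP | |- is_true (_ < _)%N => apply/ltP | |- is_true (_ == _)%N => apply/eqP end; unfold addn, subn, muln, addn_rec, subn_rec, muln_rec in *; lia.

Section RingIds.
Variable T : comNzRingType.
Add Ring RTT : (RT T).

Lemma num_id (x0 x1 x2 fs0 fs1 fs2 ft0 ft1 ft2 P0 P1 P2 Q0 Q1 Q2 l : T) :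
 l*ft0 = P1*Q2 - P2*Q1 -> l*ft1 = P2*Q0 - P0*Q2 -> l*ft2 = P0*Q1 - P1*Q0 ->
 l * ((x2*fs0 - x0*fs2)*(x2*ft1 - x1*ft2) - (x2*ft0 - x0*ft2)*(x2*fs1 - x1*fs2))
 = x2 * ((x0*P0+x1*P1+x2*P2) * (fs0*Q0+fs1*Q1+fs2*Q2)
        - (x0*Q0+x1*Q1+x2*Q2) * (fs0*P0+fs1*P1+fs2*P2)).
Proof.
move=> h0 h1 h2.
transitivity (x2*(x0*(fs1*(l*ft2) - fs2*(l*ft1)) + x1*(fs2*(l*ft0) - fs0*(l*ft2))
   + x2*(fs0*(l*ft1) - fs1*(l*ft0)))); first by rring.
rewrite h0 h1 h2; rring.
Qed.

Lemma cross_perp (E0 E1 E2 P0 P1 P2 Q0 Q1 Q2 : T) :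
  E0*P0 + E1*P1 + E2*P2 = 0 -> E0*Q0 + E1*Q1 + E2*Q2 = 0 ->
  [/\ (P1*Q2 - P2*Q1) * E1 = (P2*Q0 - P0*Q2) * E0,
      (P1*Q2 - P2*Q1) * E2 = (P0*Q1 - P1*Q0) * E0 &
      (P2*Q0 - P0*Q2) * E2 = (P0*Q1 - P1*Q0) * E1].
Proof.
move=> hP hQ; split.
- transitivity ((P2*Q0 - P0*Q2) * E0 + (Q2*(E0*P0 + E1*P1 + E2*P2) - P2*(E0*Q0 + E1*Q1 + E2*Q2))); first by rring.
  by rewrite hP hQ !mulr0 subr0 addr0.
- transitivity ((P0*Q1 - P1*Q0) * E0 + (P1*(E0*Q0 + E1*Q1 + E2*Q2) - Q1*(E0*P0 + E1*P1 + E2*P2))); first by rring.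
  by rewrite hP hQ !mulr0 subr0 addr0.
- transitivity ((P0*Q1 - P1*Q0) * E1 + (Q0*(E0*P0 + E1*P1 + E2*P2) - P0*(E0*Q0 + E1*Q1 + E2*Q2))); first by rring.
  by rewrite hP hQ !mulr0 subr0 addr0.
Qed.

Lemma primitive3 (u0 u1 u2 f0 f1 f2 X0 X1 X2 : T) :
  u0*f0 + u1*f1 + u2*f2 = 1 ->
  X0*f1 = X1*f0 -> X0*f2 = X2*f0 -> X1*f2 = X2*f1 ->
  [/\ X0 = (u0*X0 + u1*X1 + u2*X2) * f0, X1 = (u0*X0 + u1*X1 + u2*X2) * f1
     & X2 = (u0*X0 + u1*X1 + u2*X2) * f2].
Proof.
move=> hu h01 h02 h12; split.
- transitivity (X0 * (u0*f0 + u1*f1 + u2*f2)); first by rewrite hu mulr1.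
  transitivity (u0*X0*f0 + u1*(X0*f1) + u2*(X0*f2)); first by rring.
  rewrite h01 h02; rring.
- transitivity (X1 * (u0*f0 + u1*f1 + u2*f2)); first by rewrite hu mulr1.
  transitivity (u0*(X0*f1) + u1*X1*f1 + u2*(X1*f2)); first by rewrite h01; rring.
  rewrite h12; rring.
- transitivity (X2 * (u0*f0 + u1*f1 + u2*f2)); first by rewrite hu mulr1.
  transitivity (u0*(X0*f2) + u1*(X1*f2) + u2*X2*f2); first by rewrite h02 h12; rring.
  rring.
Qed.
Lemma indep_aux (p0 p1 p2 q0 q1 q2 : T) :
  p1 * q2 - p2 * q1 = 0 -> p2 * q0 - p0 * q2 = 0 -> p0 * q1 - p1 * q0 = 0 ->
  [/\ [/\ q0 * p0 + (- p0) * q0 = 0, q0 * p1 + (- p0) * q1 = 0 & q0 * p2 + (- p0) * q2 = 0],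
      [/\ q1 * p0 + (- p1) * q0 = 0, q1 * p1 + (- p1) * q1 = 0 & q1 * p2 + (- p1) * q2 = 0] &
      [/\ q2 * p0 + (- p2) * q0 = 0, q2 * p1 + (- p2) * q1 = 0 & q2 * p2 + (- p2) * q2 = 0]].
Proof.
move=> h0 h1 h2.
have e1 (u v : T) : u * v + (- v) * u = 0 by rewrite mulNr mulrC subrr.
split; split; rewrite ?e1 //.
- by transitivity (- (p0*q1 - p1*q0)); [rring | rewrite h2 oppr0].
- by transitivity (p2*q0 - p0*q2); [rring | rewrite h1].
- by transitivity (p0*q1 - p1*q0); [rring | rewrite h2].
- by transitivity (- (p1*q2 - p2*q1)); [rring | rewrite h0 oppr0].
- by transitivity (- (p2*q0 - p0*q2)); [rring | rewrite h1 oppr0].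
- by transitivity (p1*q2 - p2*q1); [rring | rewrite h0].
Qed.
Lemma salpha_aux (s fs0 fs1 fs2 ft0 ft1 ft2 D0 D1 D2 Q0 Q1 Q2 : T) :
  s * D0 = fs0 - ft0 -> s * D1 = fs1 - ft1 -> s * D2 = fs2 - ft2 ->
  Q0 * ft0 + Q1 * ft1 + Q2 * ft2 = 0 ->
  s * (D0 * Q0 + D1 * Q1 + D2 * Q2) = fs0 * Q0 + fs1 * Q1 + fs2 * Q2.
Proof.
move=> h0 h1 h2 hz.
transitivity ((s * D0) * Q0 + (s * D1) * Q1 + (s * D2) * Q2); first by rring.
rewrite h0 h1 h2.
transitivity (fs0 * Q0 + fs1 * Q1 + fs2 * Q2 - (Q0 * ft0 + Q1 * ft1 + Q2 * ft2)); first by rring.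
by rewrite hz subr0.
Qed.

Lemma final_aux (lc li x2 Lp Lq al be s num : T) :
  li * lc = 1 -> lc * num = x2 * (Lp * (s * al) - Lq * (s * be)) ->
  num = (li * (x2 * (Lp * al - Lq * be))) * s.
Proof.
move=> hli hn.
transitivity ((li * lc) * num); first by rewrite hli mul1r.
transitivity (li * (lc * num)); first by rring.
rewrite hn; rring.
Qed.
End RingIds.


Section Biv.
Variable R : comNzRingType.
Implicit Types (P Q T : {poly {poly R}}) (g : {poly R}).

Lemma sum_single (F : nat -> R) k m :
  (forall j, j != k -> F j = 0) -> \sum_(j < m) F j = if (k < m)%N then F k else 0.
Proof.
move=> hF; elim: m => [|m IH]; first by rewrite big_ord0.
rewrite big_ord_recr /= IH.
case: (ltngtP k m) => [hkm|hkm|->].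
- by rewrite (hF m) ?addr0 ?(gtn_eqF hkm) // ltnS ltnW.
- by rewrite (hF m) ?addr0 ?(ltn_eqF hkm) // ltnS leqNgt hkm.
- by rewrite ?ltnn add0r ltnSn.
Qed.

Lemma coef2_eq P Q : (forall i j, coef2 P i j = coef2 Q i j) -> P = Q.
Proof. by move=> h; apply/polyP => j; apply/polyP => i; apply: h. Qed.

Lemma coef2_pS g i j : coef2 g%:P i j = if j == 0%N then g`_i else 0.
Proof. by rewrite /coef2 coefC; case: eqP => //; rewrite coef0. Qed.

Lemma coef2_pT g i j : coef2 (map_poly polyC g) i j = if i == 0%N then g`_j else 0.
Proof. by rewrite /coef2 coef_map /= coefC. Qed.

Lemma coef2_pSM g P i j : coef2 (g%:P * P) i j = (g * P`_j)`_i.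
Proof. by rewrite /coef2 coefCM. Qed.

Lemma coef2_XM P i j : coef2 ('X * P) i j = if j == 0%N then 0 else coef2 P i j.-1.
Proof. by rewrite /coef2 coefXM; case: eqP => //; rewrite coef0. Qed.

Lemma coef2_D P Q i j : coef2 (P + Q) i j = coef2 P i j + coef2 Q i j.
Proof. by rewrite /coef2 !coefD. Qed.
Lemma coef2_B P Q i j : coef2 (P - Q) i j = coef2 P i j - coef2 Q i j.
Proof. by rewrite /coef2 !coefB. Qed.
Lemma coef2_N P i j : coef2 (- P) i j = - coef2 P i j.
Proof. by rewrite /coef2 !coefN. Qed.
Lemma coef2_0 i j : coef2 (0 : {poly {poly R}}) i j = 0.
Proof. by rewrite /coef2 !coef0. Qed.
Lemma coef2_CC (c : R) P i j : coef2 (c%:P%:P * P) i j = c * coef2 P i j.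
Proof. by rewrite /coef2 !coefCM. Qed.
Lemma coef2_sum I (r : seq I) (Pr : pred I) (F : I -> {poly {poly R}}) i j :
  coef2 (\sum_(k <- r | Pr k) F k) i j = \sum_(k <- r | Pr k) coef2 (F k) i j.
Proof. by rewrite /coef2 !coef_sum. Qed.

Lemma coef2_pTM g P i j :
  coef2 (map_poly polyC g * P) i j = \sum_(r < j.+1) g`_(j - r)%N * coef2 P i r.
Proof.
rewrite /coef2 coefMr coef_sum; apply: eq_bigr => r _.
by rewrite coef_map /= coefCM.
Qed.

Lemma coef2_M P Q i j :
  coef2 (P * Q) i j = \sum_(j1 < j.+1) \sum_(i1 < i.+1)
     coef2 P i1 j1 * coef2 Q (i - i1)%N (j - j1)%N.
Proof.
rewrite /coef2 coefM coef_sum; apply: eq_bigr => j1 _.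
by rewrite coefM.
Qed.

Lemma eval1_coef T i : (T.[1])`_i = \sum_(j < size T) coef2 T i j.
Proof.
rewrite horner_coef coef_sum; apply: eq_bigr => j _.
by rewrite expr1n mulr1.
Qed.

Lemma homog_eval_coef d T i : homog d T ->
  (T.[1])`_i = if (i <= d)%N then coef2 T i (d - i)%N else 0.
Proof.
move=> hT; rewrite eval1_coef.
case: leqP => hid.
  rewrite (@sum_single (fun j => coef2 T i j) (d - i)%N).
    case: ltnP => // hs; rewrite /coef2.
    by rewrite (leq_sizeP _ _ hs) // coef0.
  move=> j hj; apply/eqP; apply: contraR hj => /hT hij.
  by rewrite -hij addKn.
rewrite big1 // => j _; apply/eqP; apply: contraTT hid => /hT <-.
by rewrite -leqNgt leq_addr.
Qed.

Lemma homog_coef2 d T i j : homog d T ->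
  coef2 T i j = if (i + j == d)%N then (T.[1])`_i else 0.
Proof.
move=> hT; case: eqP => hij.
  by rewrite (homog_eval_coef i hT) -hij leq_addr addKn.
by case: (eqVneq (coef2 T i j) 0) => // /hT.
Qed.

Lemma homog_size d T : homog d T -> (size T.[1] <= d.+1)%N.
Proof.
move=> hT; apply/leq_sizeP => i hi.
by rewrite (homog_eval_coef i hT) leqNgt hi.
Qed.

Lemma homog_eval0 d T : homog d T -> T.[1] = 0 -> T = 0.
Proof.
move=> hT h0; apply: coef2_eq => i j.
by rewrite (homog_coef2 _ _ hT) h0 coef0 coef2_0; case: eqP.
Qed.

Lemma homog0 d : homog d (0 : {poly {poly R}}).
Proof. by move=> i j; rewrite coef2_0 eqxx. Qed.

Lemma homogD d P Q : homog d P -> homog d Q -> homog d (P + Q).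
Proof.
move=> hP hQ i j; rewrite coef2_D => h.
case: (eqVneq (coef2 P i j) 0) => [hp|/hP //].
by apply: hQ; move: h; rewrite hp add0r.
Qed.

Lemma homogN d P : homog d P -> homog d (- P).
Proof. by move=> hP i j; rewrite coef2_N oppr_eq0 => /hP. Qed.

Lemma homogB d P Q : homog d P -> homog d Q -> homog d (P - Q).
Proof. by move=> hP hQ; apply: homogD => //; apply: homogN. Qed.

Lemma homogCC d (c : R) P : homog d P -> homog d (c%:P%:P * P).
Proof.
move=> hP i j; rewrite coef2_CC => h; apply: hP.
by apply: contraNneq h => ->; rewrite mulr0.
Qed.

Lemma homogM d1 d2 P Q : homog d1 P -> homog d2 Q -> homog (d1 + d2) (P * Q).
Proof.
move=> hP hQ i j; apply: contraNeq => hne.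
rewrite coef2_M big1 // => j1 _; rewrite big1 // => i1 _.
case: (eqVneq (coef2 P i1 j1) 0) => [->|/hP h1]; first by rewrite mul0r.
case: (eqVneq (coef2 Q (i - i1)%N (j - j1)%N) 0) => [->|/hQ h2]; first by rewrite mulr0.
exfalso; move/eqP: hne; apply.
have hi : (i1 <= i)%N by rewrite -ltnS ltn_ord.
have hj : (j1 <= j)%N by rewrite -ltnS ltn_ord.
by rewrite -h1 -h2 addnACA subnKC // subnKC // addnC.
Qed.
End Biv.


Section Bez.
Variable R : idomainType.
Implicit Types (P Q T : {poly {poly R}}) (g : {poly R}).

Definition sT : {poly {poly R}} := ('X : {poly R})%:P - 'X.

Lemma sT_lead : lead_coef sT \is a GRing.unit.
Proof.
rewrite /sT -opprB lead_coefN lead_coefXsubC unitrN unitr1 //.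
Qed.

Lemma bezout_poly_eq (F G : {poly R}) K :
  F%:P * map_poly polyC G - map_poly polyC F * G%:P = K * sT ->
  bezout_poly F G = K.
Proof. by rewrite /bezout_poly => ->; apply: Pdiv.IdomainUnit.mulpK; apply: sT_lead. Qed.

Definition Dpoly (n : nat) g : {poly {poly R}} :=
  \poly_(m < n) \poly_(i < n) g`_(i + m + 1).

Lemma coef2_Dp n g i m :
  coef2 (Dpoly n g) i m = if (m < n)%N && (i < n)%N then g`_(i + m + 1) else 0.
Proof.
rewrite /coef2 /Dpoly coef_poly; case: ltnP => hm /=; last by rewrite coef0.
by rewrite coef_poly.
Qed.

Lemma coefD2 n g i m :
  ((Dpoly n g)`_m)`_i = if (m < n)%N && (i < n)%N then g`_(i + m + 1) else 0.
Proof. exact: coef2_Dp. Qed.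

Lemma D_spec n g : (size g <= n.+1)%N ->
  sT * Dpoly n g = g%:P - map_poly polyC g.
Proof.
move=> hg; have gz k : (n.+1 <= k)%N -> g`_k = 0 by move=> hk; apply: (leq_sizeP _ _ hg).
apply: coef2_eq => a b.
rewrite /sT mulrBl coef2_B coef2_pSM coef2_XM coef2_B coef2_pS coef2_pT.
rewrite coefXM !coef2_Dp ?coefD2.
case: a => [|a]; case: b => [|b] /=.
- by rewrite !subrr.
- rewrite add0n addn1.
  case: (ltnP b n) => hb /=; first by rewrite (leq_ltn_trans (leq0n b) hb).
  by rewrite gz // ltnS.
- rewrite subr0 subr0 addn0 addn1.
  case: (ltnP a n) => ha /=; first by rewrite (leq_ltn_trans (leq0n a) ha).
  by rewrite andbF gz // ltnS.
- rewrite subrr addnS addn1 addSn.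
  case: (leqP (a + b).+2 n) => hab.
    have ha : (a < n)%N by apply: leq_trans hab; rewrite ltnS -addnS leq_addr.
    have hb : (b < n)%N by apply: leq_trans hab; rewrite ltnS -addSn leq_addl.
    have ha' : (a.+1 < n)%N by apply: leq_trans hab; rewrite ltnS ltnS leq_addr.
    have hb' : (b.+1 < n)%N by apply: leq_trans hab; rewrite ltnS -addnS leq_addl.
    by rewrite ha hb ha' hb' /= addn0 addnS subrr.
  rewrite addn0 addnS !gz // ?ltnS -?addnS ?(ltnW hab) //; by case: ifP; case: ifP; rewrite ?subrr ?subr0.
Qed.
End Bez.


Section Copr.
Variable R : fieldType.
Implicit Types (P Q T : {poly {poly R}}) (g : {poly R}).

Definition Hs (s0 : R) : {poly {poly R}} := ('X : {poly R})%:P - (s0%:P)%:P * 'X.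

Lemma Hs_nonunit s0 : Hs s0 \isn't a GRing.unit.
Proof.
rewrite poly_unitE negb_and; apply/orP; right.
rewrite /Hs coefB coefC coefCM coefX mulr0 subr0 /=.
by rewrite poly_unitE size_polyX.
Qed.

Lemma X_nonunit : ('X : {poly {poly R}}) \isn't a GRing.unit.
Proof. by rewrite poly_unitE size_polyX. Qed.

Definition Gh (n' : nat) g : {poly {poly R}} :=
  \poly_(j < n'.+1) ((g`_(n' - j))%:P * 'X^(n' - j)).

Lemma coef2_Gh n' g i j :
  coef2 (Gh n' g) i j = if (j < n'.+1)%N && (i + j == n')%N then g`_i else 0.
Proof.
rewrite /coef2 /Gh coef_poly; case: ltnP => hj /=; last by rewrite coef0.
rewrite coefCM coefXn.
have -> : (i == n' - j)%N = (i + j == n')%N.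
  by apply/eqP/eqP => [->|<-]; [rewrite subnK // -ltnS | rewrite addnK].
by case: eqP => [h|_]; rewrite ?mulr1 ?mulr0 // -h addnK.
Qed.

Lemma HD n' T s0 : homog n'.+1 T -> root (T.[1]) s0 -> pdvd (Hs s0) T.
Proof.
move=> hT /factor_theorem [g hg].
have hsz : (size g <= n'.+1)%N.
  have := homog_size hT; rewrite hg.
  case: (eqVneq g 0) => [->|gn0]; first by rewrite size_poly0.
  by rewrite size_mul // ?polyXsubC_eq0 // size_XsubC addn2.
have gz k : (n'.+1 <= k)%N -> g`_k = 0 by move=> hk; apply: (leq_sizeP _ _ hsz).
exists (Gh n' g); apply: coef2_eq => i j.
rewrite (homog_coef2 _ _ hT) hg /Hs mulrBl -mulrA coef2_B coef2_pSM coef2_CC.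
rewrite coef2_XM coefXM mulrBr coefB coefMX coefMC.
rewrite -/(coef2 (Gh n' g) _ _) !coef2_Gh.
case: i => [|i]; case: j => [|j] /=.
- by rewrite mulr0 subr0.
- rewrite add0n eqSS; case: eqP => [->|_]; last by rewrite andbF mulr0 subr0.
  by rewrite ltnSn /= mulrC.
- rewrite !addn0 eqSS; case: eqP => [->|_]; last by rewrite mulr0 subr0.
  by rewrite (gz n'.+1) // mul0r mulr0.
- rewrite !addnS !addSn eqSS.
  case: eqP => [hij|_]; last by rewrite ?andbF mulr0 subr0.
  have hj1 : (j.+1 < n'.+1)%N by rewrite ltnS -hij -addnS leq_addl.
  have hj2 : (j < n'.+1)%N by apply: ltnW.
  by rewrite hj1 hj2 /= mulrC.
Qed.

Lemma XvD n' T : homog n'.+1 T -> (T.[1])`_n'.+1 = 0 -> pdvd 'X T.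
Proof.
move=> hT h0.
have hr : root T 0.
  rewrite /root horner_coef0; apply/eqP/polyP => i.
  rewrite coef0 -/(coef2 T i 0) (homog_coef2 _ _ hT) addn0.
  by case: eqP => [->|].
case/factor_theorem: hr => g hg; exists g.
by rewrite hg subr0 mulrC.
Qed.
End Copr.


Section Copr2.
Variable R : closedFieldType.
Implicit Types (P Q T a b c : {poly {poly R}}) (g : {poly R}).

Lemma big_deg n' a b c : homog n'.+1 a -> homog n'.+1 b -> homog n'.+1 c ->
  coprime3 a b c ->
  [\/ size a.[1] = n'.+2, size b.[1] = n'.+2 | size c.[1] = n'.+2].
Proof.
move=> ha hb hc hco.
have key T : homog n'.+1 T -> size T.[1] <> n'.+2 -> pdvd 'X T.
  move=> hT hs; apply: (XvD hT).
  have hs' : (size T.[1] <= n'.+1)%N.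
    by have := homog_size hT; rewrite leq_eqVlt (negbTE (introN eqP hs)) /=.
  by move/leq_sizeP: hs'; apply.
case: (eqVneq (size a.[1]) n'.+2) => [h|/eqP na]; first by constructor 1.
case: (eqVneq (size b.[1]) n'.+2) => [h|/eqP nb]; first by constructor 2.
case: (eqVneq (size c.[1]) n'.+2) => [h|/eqP nc]; first by constructor 3.
exfalso; have := hco _ (key _ ha na) (key _ hb nb) (key _ hc nc).
by apply/negP; apply: X_nonunit.
Qed.

Lemma bez3 n' a b c : homog n'.+1 a -> homog n'.+1 b -> homog n'.+1 c ->
  coprime3 a b c ->
  exists u : {poly R} * {poly R} * {poly R},
    u.1.1 * a.[1] + u.1.2 * b.[1] + u.2 * c.[1] = 1.
Proof.
move=> ha hb hc hco.
set d := gcdp a.[1] b.[1].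
have cp : coprimep d c.[1].
  rewrite coprimep_def; apply/negPn/negP => /closed_rootP [s0].
  rewrite root_gcd => /andP [].
  rewrite /d root_gcd => /andP [ra rb] rc.
  have := hco _ (HD ha ra) (HD hb rb) (HD hc rc).
  by apply/negP; apply: Hs_nonunit.
case/Bezout_eq1_coprimepP: cp => v hv.
case: (Bezoutp a.[1] b.[1]) => u /eqpP [[k1 k2] /= /andP [k1n k2n] hk].
have hd : d = (k2^-1 * k1) *: (u.1 * a.[1] + u.2 * b.[1]).
  by rewrite -scalerA hk scalerA mulVf // scale1r.
exists (v.1 * (k2^-1 * k1)%:P * u.1, v.1 * (k2^-1 * k1)%:P * u.2, v.2).
rewrite /=; transitivity (v.1 * d + v.2 * c.[1]); last exact: hv.
rewrite hd -mul_polyC mulrDr mulrDr !mulrA //.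
Qed.
End Copr2.


Lemma sum3 (V : nmodType) (F : 'I_3 -> V) : \sum_(i < 3) F i = F 0%:R + F 1%:R + F 2%:R.
Proof.
rewrite !big_ord_recr big_ord0 /=. rewrite ?add0r.
congr (F _ + F _ + F _); apply/val_inj => //.
Qed.

Lemma forall3 (P : 'I_3 -> Prop) : P 0%:R -> P 1%:R -> P 2%:R -> forall k, P k.
Proof.
move=> h0 h1 h2 [[|[|[|k]]] hk] //.
- by have -> : Ordinal hk = 0%:R by apply/val_inj.
- by have -> : Ordinal hk = 1%:R by apply/val_inj.
- by have -> : Ordinal hk = 2%:R by apply/val_inj.
Qed.

Lemma size_Mle (K : comNzRingType) (A B : {poly K}) m k :
  (size A <= m.+1)%N -> (size B <= k.+1)%N -> (size (A * B)%R <= (m + k).+1)%N.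
Proof.
move=> hA hB; apply: leq_trans (size_polyMleq _ _) _.
rewrite -subn1 leq_subLR add1n; apply: leq_trans (leq_add hA hB) _; by rewrite addSn addnS.
Qed.

Lemma size_Dle (K : nzRingType) (A B : {poly K}) m :
  (size A <= m)%N -> (size B <= m)%N -> (size (A + B)%R <= m)%N.
Proof. by move=> hA hB; apply: leq_trans (size_polyD _ _) _; rewrite geq_max hA hB. Qed.

Lemma size_Ble (K : nzRingType) (A B : {poly K}) m :
  (size A <= m)%N -> (size B <= m)%N -> (size (A - B)%R <= m)%N.
Proof. by move=> hA hB; apply: size_Dle; rewrite ?size_polyN. Qed.

Lemma sylv_coef (K : comNzRingType) (L : {poly {poly K}}) d A r j k :
  homog d L -> (A + r + d = j + k)%N ->
  coef2 ('X^A * ('X^r)%:P * L) j k = if (r <= j)%N then (L.[1])`_(j - r) else 0.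
Proof.
move=> hL he; rewrite /coef2 -mulrA coefXnM.
case: (ltnP k A) => hk.
  rewrite coef0; case: (leqP r j) => hr //.
  by rewrite (homog_eval_coef _ hL) ifF //; apply/negbTE; rewrite -ltnNge; nlia.
rewrite coefCM coefXnM; case: (ltnP j r) => hr.
  by [].
rewrite (homog_eval_coef _ hL) ifT; last by nlia.
by have -> : (d - (j - r) = k - A)%N by nlia.
Qed.

Lemma sum_extend (K : nmodType) (G : nat -> K) m N : (m <= N)%N ->
  (forall r, (m <= r)%N -> (r < N)%N -> G r = 0) ->
  \sum_(r < m) G r = \sum_(r < N) G r.
Proof.
move=> hm hG; rewrite (big_ord_widen N G hm) big_mkcond /=.
apply: eq_bigr => r _; case: ltnP => // h; by rewrite hG.
Qed.

Lemma sum_trunc (K : nmodType) (G : nat -> K) j B :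
  (forall r, (B <= r)%N -> G r = 0) ->
  \sum_(r < j.+1) G r = \sum_(r < B) (if (r <= j)%N then G r else 0).
Proof.
move=> hG.
transitivity (\sum_(r < j.+1) (if (r <= j)%N then G r else 0)).
  by apply: eq_bigr => r _; rewrite -ltnS ltn_ord.
rewrite (@sum_extend _ (fun r => if (r <= j)%N then G r else 0) j.+1 (j.+1 + B)) ?leq_addr //; last first.
  by move=> r hr _; rewrite leqNgt hr.
rewrite [RHS](@sum_extend _ (fun r => if (r <= j)%N then G r else 0) B (j.+1 + B)) ?leq_addl //.
by move=> r hr _; rewrite (hG r hr); case: ifP.
Qed.

Lemma sum_split (K : nmodType) (G : nat -> K) N M : (M <= N)%N ->
  \sum_(r < N) G r = \sum_(r < (N - M)%N) G r + \sum_(k < M) G (N - M + k)%N.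
Proof.
move=> hM.
rewrite -(big_mkord xpredT G) (@big_cat_nat _ _ _ (N - M)%N) ?leq_subr //=.
have e : \sum_((N - M)%N <= i < N) G i = \sum_(k < M) G (N - M + k)%N.
  rewrite -{1}[(N - M)%N]add0n big_addn (subKn hM) big_mkord.
  by apply: eq_bigr => k _; rewrite addnC.
by rewrite e big_mkord.
Qed.

Lemma homog_lin (K : comNzRingType) d (x : 'I_3 -> K) (P : 'I_3 -> {poly {poly K}}) :
  (forall k, homog d (P k)) -> homog d (lin x P).
Proof.
move=> hP; rewrite /lin sum3.
by apply: homogD; [apply: homogD|]; apply: homogCC.
Qed.

Lemma lin_eval (K : comNzRingType) (x : 'I_3 -> K) (P : 'I_3 -> {poly {poly K}}) :
  (lin x P).[1] = (x 0%:R)%:P * (P 0%:R).[1] + (x 1%:R)%:P * (P 1%:R).[1]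
                  + (x 2%:R)%:P * (P 2%:R).[1].
Proof. by rewrite /lin sum3 !hornerD !hornerM !hornerC. Qed.

Section Main.
Variable R : closedFieldType.
Variables (n' mu : nat) (a b c : {poly {poly R}}) (p q : 'I_3 -> {poly {poly R}}).
Local Notation n := n'.+1.
Hypotheses (ha : homog n a) (hb : homog n b) (hc : homog n c).
Hypothesis hco : coprime3 a b c.
Hypothesis hmu : mu_basis n mu (abc a b c) p q.

Let f0 := a.[1]. Let f1 := b.[1]. Let f2 := c.[1].
Let p0 := p 0%:R. Let p1 := p 1%:R. Let p2 := p 2%:R.
Let q0 := q 0%:R. Let q1 := q 1%:R. Let q2 := q 2%:R.
Let P0 := p0.[1]. Let P1 := p1.[1]. Let P2 := p2.[1].
Let Q0 := q0.[1]. Let Q1 := q1.[1]. Let Q2 := q2.[1].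

Lemma mu_le : (mu <= n - mu)%N.
Proof. by case: hmu. Qed.

Lemma hom_p k : homog mu (p k). Proof. by case: hmu => _ [hp _]. Qed.
Lemma hom_q k : homog (n - mu) (q k). Proof. by case: hmu => _ [_ hq]. Qed.

Lemma syzP : P0 * f0 + P1 * f1 + P2 * f2 = 0.
Proof.
case: hmu => _ _ [hp _] _ _; move: hp; rewrite /syz sum3 => /(congr1 (horner^~ 1)).
by rewrite !hornerD !hornerM horner0.
Qed.

Lemma syzQ : Q0 * f0 + Q1 * f1 + Q2 * f2 = 0.
Proof.
case: hmu => _ _ [_ hq] _ _; move: hq; rewrite /syz sum3 => /(congr1 (horner^~ 1)).
by rewrite !hornerD !hornerM horner0.
Qed.

Let W0 := P1 * Q2 - P2 * Q1.
Let W1 := P2 * Q0 - P0 * Q2.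
Let W2 := P0 * Q1 - P1 * Q0.

Lemma W_neq0 : ~ [/\ W0 = 0, W1 = 0 & W2 = 0].
Proof.
case=> h0 h1 h2.
have mun : (mu + (n - mu) = n)%N by rewrite subnKC // (leq_trans mu_le) // leq_subr.
have hW (i j k l : 'I_3) : (p i * q j - p k * q l).[1] = 0 ->
    p i * q j - p k * q l = 0.
  move=> h; apply: (@homog_eval0 _ n) h; rewrite -{1}mun.
  by apply: homogB; apply: homogM; first [apply: hom_p | apply: hom_q].
have H0 : p1 * q2 - p2 * q1 = 0.
  by apply: hW; rewrite hornerD hornerN !hornerM; exact: h0.
have H1 : p2 * q0 - p0 * q2 = 0.
  by apply: hW; rewrite hornerD hornerN !hornerM; exact: h1.
have H2 : p0 * q1 - p1 * q0 = 0.
  by apply: hW; rewrite hornerD hornerN !hornerM; exact: h2.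
case: (indep_aux H0 H1 H2) => [[e00 e01 e02] [e10 e11 e12] [e20 e21 e22]].
case: hmu => _ _ _ _ hind.
have pn0 : ~ [/\ p0 = 0, p1 = 0 & p2 = 0].
  case=> z0 z1 z2; have := hind 1 0.
  case; last by move=> /eqP; rewrite oner_eq0.
  by apply: forall3; rewrite mul1r mul0r addr0.
case: (eqVneq p0 0) => [z0|n0].
  case: (eqVneq p1 0) => [z1|n1].
    case: (eqVneq p2 0) => [z2|n2]; first by apply: pn0.
    have [_ /eqP] := hind (q 2%:R) (- p 2%:R) (forall3 e20 e21 e22).
    by rewrite oppr_eq0 (negbTE n2).
  have [_ /eqP] := hind (q 1%:R) (- p 1%:R) (forall3 e10 e11 e12).
  by rewrite oppr_eq0 (negbTE n1).
have [_ /eqP] := hind (q 0%:R) (- p 0%:R) (forall3 e00 e01 e02).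
by rewrite oppr_eq0 (negbTE n0).
Qed.

Lemma sizeP k : (size (p k).[1] <= mu.+1)%N.
Proof. have := homog_size (hom_p (k:=k)); exact. Qed.
Lemma sizeQ k : (size (q k).[1] <= (n - mu).+1)%N.
Proof. have := homog_size (hom_q (k:=k)); exact. Qed.

Lemma sizeW : [/\ (size W0 <= n.+1)%N, (size W1 <= n.+1)%N & (size W2 <= n.+1)%N].
Proof.
have mun : (mu + (n - mu) = n)%N by rewrite subnKC // (leq_trans mu_le) // leq_subr.
have h (i j k l : 'I_3) : (size ((p i).[1] * (q j).[1] - (p k).[1] * (q l).[1])%R <= n.+1)%N.
  by rewrite -mun; apply: size_Ble; apply: size_Mle; rewrite ?sizeP ?sizeQ.
by split; apply: h.
Qed.

Lemma lam_ex : exists2 l : R, l != 0 &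
  [/\ W0 = l%:P * f0, W1 = l%:P * f1 & W2 = l%:P * f2].
Proof.
have [hx0 hx1 hx2] : [/\ W0 * f1 = W1 * f0, W0 * f2 = W2 * f0 & W1 * f2 = W2 * f1].
  apply: cross_perp.
    by rewrite -syzP ![f0 * _]mulrC ![f1 * _]mulrC ![f2 * _]mulrC.
  by rewrite -syzQ ![f0 * _]mulrC ![f1 * _]mulrC ![f2 * _]mulrC.
have [[[u0 u1] u2] /= hu] := bez3 ha hb hc hco.
have [e0 e1 e2] := primitive3 hu hx0 hx1 hx2.
set g := u0 * W0 + u1 * W1 + u2 * W2 in e0 e1 e2.
have gn0 : g != 0.
  apply/eqP => g0; apply: W_neq0; by rewrite e0 e1 e2 g0 !mul0r.
have [s0 s1 s2] := sizeW.
have gs : (size g <= 1)%N.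
  have key (fk Wk : {poly R}) : size fk = n.+1 -> Wk = g * fk -> (size Wk <= n.+1)%N ->
      (size g <= 1)%N.
    move=> hs he hW; move: hW; rewrite he size_mul //; last by rewrite -size_poly_eq0 hs.
    by rewrite hs addnS /= -[n'.+2]add1n leq_add2r.
  case: (big_deg ha hb hc hco) => hs; [exact: key hs e0 s0 | exact: key hs e1 s1 | exact: key hs e2 s2].
exists g`_0.
  by apply: contra gn0 => /eqP h0; rewrite (size1_polyC gs) h0.
by rewrite -(size1_polyC gs).
Qed.

Section WithLam.
Variable l : R.
Hypothesis hl : l != 0.
Hypotheses (hW0 : W0 = l%:P * f0) (hW1 : W1 = l%:P * f1) (hW2 : W2 = l%:P * f2).
Variable x : 'I_3 -> R.
Let x0 := x 0%:R. Let x1 := x 1%:R. Let x2 := x 2%:R.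
Local Notation pT := (map_poly (@polyC R)).
Let F := x2 *: f0 - x0 *: f2.
Let G := x2 *: f1 - x1 *: f2.
Let Lp := x0%:P * P0 + x1%:P * P1 + x2%:P * P2.
Let Lq := x0%:P * Q0 + x1%:P * Q1 + x2%:P * Q2.
Definition alpha := Dpoly n f0 * pT Q0 + Dpoly n f1 * pT Q1 + Dpoly n f2 * pT Q2.
Definition beta := Dpoly n f0 * pT P0 + Dpoly n f1 * pT P1 + Dpoly n f2 * pT P2.
Definition Kb := (l^-1)%:P%:P * (x2%:P%:P * (pT Lp * alpha - pT Lq * beta)).

Lemma hDf : [/\ sT R * Dpoly n f0 = f0%:P - pT f0, sT R * Dpoly n f1 = f1%:P - pT f1
   & sT R * Dpoly n f2 = f2%:P - pT f2].
Proof. by split; apply: D_spec; apply: homog_size; eassumption. Qed.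

Lemma s_alpha : sT R * alpha = f0%:P * pT Q0 + f1%:P * pT Q1 + f2%:P * pT Q2.
Proof.
have [d0 d1 d2] := hDf.
apply: salpha_aux d0 d1 d2 _.
have : pT (Q0 * f0 + Q1 * f1 + Q2 * f2) = 0 by rewrite syzQ rmorph0.
by rewrite !rmorphD !rmorphM.
Qed.

Lemma s_beta : sT R * beta = f0%:P * pT P0 + f1%:P * pT P1 + f2%:P * pT P2.
Proof.
have [d0 d1 d2] := hDf.
apply: salpha_aux d0 d1 d2 _.
have : pT (P0 * f0 + P1 * f1 + P2 * f2) = 0 by rewrite syzP rmorph0.
by rewrite !rmorphD !rmorphM.
Qed.

Lemma size_sT : size (sT R) = 2%N.
Proof. by rewrite /sT -opprB size_polyN size_XsubC. Qed.

Lemma size_sT_mul (A : {poly {poly R}}) m :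
  (size (sT R * A)%R <= m.+1)%N -> (size A <= m)%N.
Proof.
case: (eqVneq A 0) => [->|An0]; first by rewrite size_poly0.
have sn : sT R != 0 by rewrite -size_poly_eq0 size_sT.
by rewrite size_mul // size_sT.
Qed.

Lemma size_fQ (fk Y : {poly R}) m : (size Y <= m.+1)%N -> (size (fk%:P * pT Y)%R <= m.+1)%N.
Proof.
move=> hY; rewrite -[m]add0n; apply: size_Mle; first exact: size_polyC_leq1.
by rewrite size_map_polyC.
Qed.

Lemma size_alpha : (size alpha <= n - mu)%N.
Proof.
apply: size_sT_mul; rewrite s_alpha.
by apply: size_Dle; [apply: size_Dle|]; apply: size_fQ; apply: sizeQ.
Qed.

Lemma size_beta : (size beta <= mu)%N.
Proof.
apply: size_sT_mul; rewrite s_beta.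
by apply: size_Dle; [apply: size_Dle|]; apply: size_fQ; apply: sizeP.
Qed.

Lemma key_num : F%:P * pT G - pT F * G%:P = Kb * sT R.
Proof.
have pTC (r : R) : pT r%:P = r%:P%:P by rewrite map_polyC.
have lW (W fk : {poly R}) : W = l%:P * fk -> l%:P%:P * pT fk = pT W.
  by move=> ->; rewrite rmorphM /= pTC.
have lW0 : l%:P%:P * pT f0 = pT P1 * pT Q2 - pT P2 * pT Q1.
  by rewrite (lW _ _ hW0) /W0 rmorphB !rmorphM.
have lW1 : l%:P%:P * pT f1 = pT P2 * pT Q0 - pT P0 * pT Q2.
  by rewrite (lW _ _ hW1) /W1 rmorphB !rmorphM.
have lW2 : l%:P%:P * pT f2 = pT P0 * pT Q1 - pT P1 * pT Q0.
  by rewrite (lW _ _ hW2) /W2 rmorphB !rmorphM.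
have N := num_id x0%:P%:P x1%:P%:P x2%:P%:P f0%:P f1%:P f2%:P lW0 lW1 lW2.
rewrite /Kb; apply: (final_aux (lc := l%:P%:P)).
  by rewrite -polyCM -polyCM mulVf.
rewrite s_alpha s_beta /Lp /Lq !rmorphD !rmorphM /= !pTC -N.
congr (_ * (_ * _ - _ * _)).
- by rewrite polyCN -!mul_polyC !polyCM.
- by rewrite rmorphN -!mul_polyC !rmorphM /= !pTC.
- by rewrite rmorphN -!mul_polyC !rmorphM /= !pTC.
- by rewrite polyCN -!mul_polyC !polyCM.
Qed.
Definition Nm : 'M[R]_n := \matrix_(i < n, r < n)
  if (r < n - mu)%N then l^-1 * coef2 alpha i r
  else - (l^-1 * coef2 beta i (r - (n - mu))).

Lemma alpha_z i r : (n - mu <= r)%N -> coef2 alpha i r = 0.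
Proof. by move=> hr; rewrite /coef2 (leq_sizeP _ _ size_alpha) ?coef0. Qed.
Lemma beta_z i r : (mu <= r)%N -> coef2 beta i r = 0.
Proof. by move=> hr; rewrite /coef2 (leq_sizeP _ _ size_beta) ?coef0. Qed.

Lemma main_eq :
  bezout_mx n (x 2%:R *: a.[1] - x 0%:R *: c.[1]) (x 2%:R *: b.[1] - x 1%:R *: c.[1])
  = x 2%:R *: (Nm *m sylv n mu p q x).
Proof.
have mle : (mu <= n - mu)%N := mu_le.
apply/matrixP => i j; rewrite !mxE.
rewrite (bezout_poly_eq key_num) /Kb coef2_CC coef2_CC coef2_B !coef2_pTM.
set sv := fun r : nat => if (r < n - mu)%N then (if (r <= j)%N then Lp`_(j - r) else 0)
   else (if (r - (n - mu) <= j)%N then Lq`_(j - (r - (n - mu))) else 0).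
set nv := fun r : nat => if (r < n - mu)%N then l^-1 * coef2 alpha i r
   else - (l^-1 * coef2 beta i (r - (n - mu))).
have eS (r : 'I_n) : sylv n mu p q x r j = sv r.
  have hj := ltn_ord j; have hr' := ltn_ord r.
  rewrite /sylv mxE /sv /=; case: (ltnP r (n - mu)) => hr.
    rewrite (sylv_coef (d := mu)); last by nlia.
      by rewrite lin_eval.
    by apply: homog_lin => k; apply: hom_p.
  rewrite (sylv_coef (d := n - mu)); last by nlia.
    by rewrite lin_eval.
  by apply: homog_lin => k; apply: hom_q.
rewrite (eq_bigr (fun r : 'I_n => nv r * sv r)); last first.
  by move=> r _; rewrite eS mxE.
rewrite (@sum_split _ (fun r => nv r * sv r) n mu); last by apply: leq_trans mle (leq_subr _ _).
rewrite (@sum_trunc _ (fun r => Lp`_(j - r) * coef2 alpha i r) j (n - mu)); last first.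
  by move=> r hr; rewrite alpha_z // mulr0.
rewrite (@sum_trunc _ (fun r => Lq`_(j - r) * coef2 beta i r) j mu); last first.
  by move=> r hr; rewrite beta_z // mulr0.
have e1 : \sum_(r < n - mu) nv r * sv r =
    l^-1 * \sum_(r < n - mu) (if (r <= j)%N then Lp`_(j - r) * coef2 alpha i r else 0).
  rewrite mulr_sumr; apply: eq_bigr => r _; rewrite /nv /sv ltn_ord.
  by case: ifP => _; rewrite ?mulr0 // -mulrA [coef2 _ _ _ * _]mulrC.
have e2 : \sum_(k < mu) nv (n - mu + k)%N * sv (n - mu + k)%N =
    - (l^-1 * \sum_(k < mu) (if (k <= j)%N then Lq`_(j - k) * coef2 beta i k else 0)).
  rewrite mulr_sumr -sumrN; apply: eq_bigr => k _.
  rewrite /nv /sv ltnNge leq_addr /= addKn.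
  by case: ifP => _; rewrite ?mulr0 ?oppr0 // mulNr -mulrA [coef2 _ _ _ * _]mulrC.
rewrite e1 e2.
by rewrite mulrCA mulrBr.
Qed.
End WithLam.

Section Inv.
Variable v : 'rV[R]_n.
Local Notation pT := (map_poly (@polyC R)).
Definition Epoly (g : {poly R}) : {poly R} :=
  \poly_(m < n) \sum_(i < n) v 0 i * g`_(i + m + 1).

Lemma E_coef g (Y : {poly R}) r :
  \sum_(i < n) v 0 i * coef2 (Dpoly n g * pT Y) i r = (Epoly g * Y)`_r.
Proof.
transitivity (\sum_(m < r.+1) \sum_(i < n) v 0 i * (Y`_(r - m) * coef2 (Dpoly n g) i m)).
  rewrite exchange_big; apply: eq_bigr => i _.
  by rewrite [Dpoly n g * _]mulrC coef2_pTM mulr_sumr.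
rewrite coefM; apply: eq_bigr => m _.
rewrite coef_poly; case: ltnP => hm.
  rewrite mulr_suml; apply: eq_bigr => i _.
  by rewrite coef2_Dp hm ltn_ord /= mulrCA mulrC.
rewrite mul0r big1 // => i _.
by rewrite coef2_Dp ltnNge hm /= !mulr0.
Qed.

Lemma size_E g : (size (Epoly g) <= n)%N.
Proof. exact: size_poly. Qed.

Lemma tri (g : {poly R}) : size g = n.+1 ->
  (forall m, (m < n)%N -> \sum_(i < n) v 0 i * g`_(i + m + 1) = 0) -> v = 0.
Proof.
move=> hs hE.
have gn : g`_n != 0.
  by have := lead_coef_eq0 g; rewrite lead_coefE hs /= => ->; rewrite -size_poly_eq0 hs.
have gz k : (n.+1 <= k)%N -> g`_k = 0 by move=> hk; apply: (leq_sizeP _ _ (eq_leq hs)).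
apply/rowP => i; rewrite mxE.
elim/ltn_ind: {i}(nat_of_ord i) {-2}i (erefl (nat_of_ord i)) => k IH i hi.
have hi' := ltn_ord i.
have hm : (n - 1 - i < n)%N by nlia.
have hsum : \sum_(j < n) v 0 j * g`_(j + (n - 1 - i) + 1) = v 0 i * g`_n.
  rewrite (bigD1 i) //=.
  have -> : (i + (n - 1 - i) + 1 = n)%N by nlia.
  rewrite big1 ?addr0 // => j hj.
  case: (ltngtP j i) => hji.
  - by rewrite (IH j) ?mul0r //; rewrite -hi.
  - by rewrite gz ?mulr0 //; nlia.
  - by move: hj; rewrite (val_inj hji) eqxx.
move: (hE _ hm); rewrite hsum => /eqP.
by rewrite mulf_eq0 (negbTE gn) orbF => /eqP.
Qed.
End Inv.

Section Unit.
Variable l : R.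
Hypothesis hl : l != 0.
Hypotheses (hW0 : W0 = l%:P * f0) (hW1 : W1 = l%:P * f1) (hW2 : W2 = l%:P * f2).

Lemma Nm_unit : Nm l \in unitmx.
Proof.
rewrite unitmxE unitfE; apply/negP => /det0P [v vn0 hv].
move/negP: vn0; apply; apply/eqP.
have hy (r : 'I_n) : \sum_(i < n) v 0 i * Nm l i r = 0.
  by move/matrixP: hv => /(_ 0 r); rewrite !mxE.
have hl' : l^-1 != 0 by rewrite invr_eq0.
have hA r : \sum_(i < n) v 0 i * coef2 alpha i r = 0.
  case: (ltnP r (n - mu)) => hr; last by rewrite big1 // => i _; rewrite alpha_z ?mulr0.
  have hrn : (r < n)%N by apply: leq_trans hr (leq_subr _ _).
  have := hy (Ordinal hrn).
  under eq_bigr do rewrite mxE /= hr mulrCA.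
  by rewrite -mulr_sumr => /eqP; rewrite mulf_eq0 (negbTE hl') /= => /eqP.
have hB r : \sum_(i < n) v 0 i * coef2 beta i r = 0.
  case: (ltnP r mu) => hr; last by rewrite big1 // => i _; rewrite beta_z ?mulr0.
  have hrn : (n - mu + r < n)%N by have hml := mu_le; nlia.
  have := hy (Ordinal hrn).
  under eq_bigr do rewrite mxE /= ltnNge leq_addr /= addKn mulrN mulrCA.
  rewrite sumrN -mulr_sumr => /eqP; rewrite oppr_eq0 mulf_eq0 (negbTE hl') /= => /eqP.
  done.
set E0 := Epoly v f0; set E1 := Epoly v f1; set E2 := Epoly v f2.
have hQ : E0 * Q0 + E1 * Q1 + E2 * Q2 = 0.
  apply/polyP => r; rewrite coef0 !coefD -!E_coef -!big_split /=.
  transitivity (\sum_(i < n) v 0 i * coef2 alpha i r); last exact: hA r.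
  by apply: eq_bigr => i _; rewrite -!mulrDr /alpha !coef2_D.
have hP : E0 * P0 + E1 * P1 + E2 * P2 = 0.
  apply/polyP => r; rewrite coef0 !coefD -!E_coef -!big_split /=.
  transitivity (\sum_(i < n) v 0 i * coef2 beta i r); last exact: hB r.
  by apply: eq_bigr => i _; rewrite -!mulrDr /beta !coef2_D.
have [c0 c1 c2] := cross_perp hP hQ.
have hlP : l%:P != 0 by rewrite polyC_eq0.
have canc (A B C D : {poly R}) : (l%:P * A) * B = (l%:P * C) * D -> A * B = C * D.
  by rewrite -!mulrA => /(mulfI hlP).
rewrite -/W0 -/W1 -/W2 hW0 hW1 hW2 in c0 c1 c2.
have d0 : E0 * f1 = E1 * f0 by rewrite mulrC -(canc _ _ _ _ c0) mulrC.
have d1 : E0 * f2 = E2 * f0 by rewrite mulrC -(canc _ _ _ _ c1) mulrC.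
have d2 : E1 * f2 = E2 * f1 by rewrite mulrC -(canc _ _ _ _ c2) mulrC.
have [[[u0 u1] u2] /= hu] := bez3 ha hb hc hco.
have [e0 e1 e2] := primitive3 hu d0 d1 d2.
set g := u0 * E0 + u1 * E1 + u2 * E2 in e0 e1 e2.
have key (fk : {poly R}) : size fk = n.+1 -> Epoly v fk = g * fk -> v = 0.
  move=> hs he; apply: (tri hs) => m hm.
  have hg : g = 0.
    apply/eqP; apply/negPn/negP => gn0.
    have := size_E v fk; rewrite he size_mul // -?size_poly_eq0 ?hs //.
    by rewrite addnS /= -ltnS ltnNge -[n.+1]add1n leq_add2r lt0n size_poly_eq0 gn0.
  by move: he; rewrite hg mul0r => /(congr1 (fun P : {poly R} => P`_m)); rewrite coef0 coef_poly hm.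
by case: (big_deg ha hb hc hco) => hs; [apply: (key _ hs e0) | apply: (key _ hs e1) | apply: (key _ hs e2)].
Qed.
End Unit.

End Main.

Unset Implicit Arguments.

Theorem proposition6p1 (R : closedFieldType) (n mu : nat)
    (a b c : {poly {poly R}}) (p q : 'I_3 -> {poly {poly R}}) :
  [pchar R] =i pred0 ->
  (3 <= n)%N ->
  homog n a -> homog n b -> homog n c ->
  coprime3 a b c ->
  birational_param a b c ->
  mu_basis n mu (abc a b c) p q ->
  exists N : 'M[R]_n, N \in unitmx /\
    forall x : 'I_3 -> R,
      bezout_mx n (x 2%:R *: a.[1] - x 0%:R *: c.[1])
                  (x 2%:R *: b.[1] - x 1%:R *: c.[1])
      = x 2%:R *: (N *m sylv n mu p q x).
Proof.
move=> _; case: n => [//|n'] _ ha hb hc hco _ hmu.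
have [l hl [hW0 hW1 hW2]] := lam_ex ha hb hc hco hmu.
exists (Nm n' mu a b c p q l); split.
  exact: (Nm_unit ha hb hc hco hmu hl hW0 hW1 hW2).
move=> x; exact: (main_eq ha hb hc hmu hl hW0 hW1 hW2 x).
Qed.
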